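(* Let $G>0$, $\bar\rho>0$, and let $W$ and $g$ be as in the context. Let $T>0$, $\mu\in\mathbb{R}$, and let $q:[0,T)\to[0,\infty)$ and $\varphi:[0,1]\to[0,\infty)$ be twice differentiable, with $\varphi(0)=\varphi''(0)=0$ and $\varphi'>0$ on $[0,1]$. Define \[ \lambda(R)=\begin{cases}\varphi(R)/R, & R\in(0,1],\\ \varphi'(0), & R=0,\end{cases}\qquad y(R)=\frac{\varphi'(R)}{\lambda(R)},\quad R\in[0,1]. \] Assume that \[ \begin{cases} \displaystyle \frac{\varphi^2}{R^5}\,\partial_R\Big(\frac{R^4}{\varphi}\,g'(y)\Big) + \frac{\varphi}{R^2}\,g(y) = \Big(\frac{4\pi}{3}G\bar\rho + \mu\,\lambda^3\Big)\bar\rho^{-\frac13}\,\varphi,\\[2mm] g'(y(1))=0,\qquad \varphi(1)=1, \end{cases} \] and that $q^2\ddot q=\mu$ on $[0,T)$ with $q(0)=1$. Then $\phi(t,R)=q(t)\varphi(R)$ satisfies \[ \begin{cases} \displaystyle \phi_{tt} - \bar\rho^{\frac13}\Big[\frac{1}{R^2\phi}\,\partial_R\Big(\frac{R^4}{\phi}\,g'(Y)\Big) + \frac{R}{\phi^2}\,g(Y)\Big] + \frac{4\pi}{3}R^3 G\bar\rho\,\phi^{-2}=0,\\[2mm] g'(Y(t,1))=0, \end{cases} \] where $\Lambda(t,R)=\phi(t,R)/R$ for $R\in(0,1]$, $\Lambda(t,0)=\phi_R(t,0)$, and $Y(t,R)=\phi_R(t,R)/\Lambda(t,R)$.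
   Context: The strain-energy function $W:GL_+(3,\mathbb{R})\to\mathbb{R}$ is continuously differentiable, objective ($W(OF)=W(F)$) and isotropic ($W(FO)=W(F)$) for all $O\in SO(3,\mathbb{R})$, homogeneous of degree $-1$ ($W(\sigma F)=\sigma^{-1}W(F)$ for $\sigma>0$), and normalized by $W(I)=\bar\rho^{1/3}$. For $y>0$ and unit vector $\omega\in\mathbb{S}^2$, $g(y)=\bar\rho^{-1/3}W(I+(y-1)\,\omega\otimes\omega)$, which is independent of $\omega$. The second displayed system is the Lagrangian equation for spherically symmetric flow maps $x(t,X)=\phi(t,|X|)X/|X|$ of a self-gravitating hyperelastic body occupying the unit ball in reference configuration with traction-free boundary. *)

(* Defs.v *)
From HB Require Import structures.
From mathcomp Require Import all_boot all_order all_algebra.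
From mathcomp Require Import all_classical all_reals all_analysis.

Set Implicit Arguments.
Unset Strict Implicit.
Unset Printing Implicit Defensive.

Import Order.TTheory GRing.Theory Num.Theory.
Import numFieldNormedType.Exports.
Local Open Scope classical_set_scope.
Local Open Scope ring_scope.

Section Defs.
Variable R : realType.

Definition GLplus3 : set 'M[R]_3 := [set F | 0 < \det F].

Definition SO3 : set 'M[R]_3 := [set O | O^T *m O = 1%:M /\ \det O = 1].

(* continuously differentiable on an (open) set U of matrices: differentiable
   at every point of U, with all directional derivatives continuous on U
   (equivalently, F |-> 'd W F continuous, as the space is finite dimensional) *)
Definition C1_on (U : set 'M[R]_3) (W : 'M[R]_3 -> R) : Prop :=
  (forall F, U F -> differentiable W F) /\
  (forall v : 'M[R]_3, {within U, continuous ('D_v W)}).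

(* the fixed unit vector omega = e_1, and omega ⊗ omega = omega omega^T *)
Definition omega : 'cV[R]_3 := delta_mx 0 0.

Definition gfun (W : 'M[R]_3 -> R) (rho : R) (y : R) : R :=
  rho `^ (- 3^-1) * W (1%:M + (y - 1) *: (omega *m omega^T)).

Definition lam (vphi : R -> R) (r : R) : R :=
  if r == 0 then derive1 vphi 0 else vphi r / r.

Definition yfun (vphi : R -> R) (r : R) : R := derive1 vphi r / lam vphi r.

Definition Phi (q vphi : R -> R) (t r : R) : R := q t * vphi r.

Definition Phi_R (q vphi : R -> R) (t r : R) : R :=
  derive1 (fun s => Phi q vphi t s) r.
Definition Phi_t (q vphi : R -> R) (t r : R) : R :=
  derive1 (fun s => Phi q vphi s r) t.
Definition Phi_tt (q vphi : R -> R) (t r : R) : R :=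
  derive1 (fun s => Phi_t q vphi s r) t.

Definition Lam (q vphi : R -> R) (t r : R) : R :=
  if r == 0 then Phi_R q vphi t 0 else Phi q vphi t r / r.

Definition Yfun (q vphi : R -> R) (t r : R) : R :=
  Phi_R q vphi t r / Lam q vphi t r.

End Defs.

(* Main.v *)
Require Import Defs.
From HB Require Import structures.
From mathcomp Require Import all_boot all_order all_algebra.
From mathcomp Require Import all_classical all_reals all_analysis.
From mathcomp Require Import ring.
Import Order.TTheory GRing.Theory Num.Theory.
Import numFieldNormedType.Exports.
Local Open Scope classical_set_scope.
Local Open Scope ring_scope.

Lemma derive1_scal (R : realType) (c : R) (f : R -> R) x :
  derive1 (fun s => c * f s) x = c * derive1 f x.
Proof.
rewrite !derive1E.
have [df|ndf] := pselect (derivable f x 1).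
  have := deriveZ c df. rewrite /GRing.scale /=. by move=> <-.
have [->|c0] := eqVneq c 0.
  rewrite mul0r. under eq_fun do rewrite mul0r.
  by rewrite derive_cst.
have ndcf : ~ derivable (fun s => c * f s) x 1.
  move=> dcf; apply: ndf.
  have := derivableZ (k := c^-1) dcf.
  suff -> : (c^-1 \*: (fun s => c * f s)) = f by [].
  by apply: funext => s /=; rewrite /GRing.scale /= mulrA mulVf // mul1r.
rewrite /derive (dvgP ndcf) (dvgP ndf).
by rewrite mulr0.
Qed.

Lemma q_nz (R : realType) (T mu : R) (q : R -> R) :
  (forall t, 0 <= t < T -> 0 <= q t /\ derivable q t 1 /\ derivable (derive1 q) t 1) ->
  (forall t, 0 <= t < T -> q t ^+ 2 * derive1n 2 q t = mu) ->
  q 0 = 1 -> forall t, 0 <= t < T -> q t != 0.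
Proof.
move=> Hq Hode q0 t0 /andP[t0ge t0lt]; apply/negP => /eqP qt0.
have t0pos : 0 < t0.
  rewrite lt_def t0ge andbT; apply/eqP => e; move: qt0; rewrite e q0.
  by move/eqP; rewrite oner_eq0.
have mu0 : mu = 0.
  by rewrite -(Hode t0) ?qt0 ?expr0n ?mul0r // t0ge t0lt.
have isd (g : R -> R) s : derivable g s 1 -> is_derive s 1 g (derive1 g s).
  by move=> dg; rewrite derive1E; exact: derivableP.
have dq s : 0 <= s < T -> derivable q s 1 by move=> /Hq [_ []].
have ddq s : 0 <= s < T -> derivable (derive1 q) s 1 by move=> /Hq [_ []].
have fermat s : 0 < s < T -> q s = 0 -> derive1 q s = 0.
  move=> /andP[s0 sT] qs.
  have H : is_derive s 1 q 0.
    apply: (@derive1_at_min R q 0 T s (ltW (lt_trans s0 sT))).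
    - by move=> u; rewrite in_itv /= => /andP[u0 uT]; apply: dq; rewrite ltW.
    - by rewrite in_itv /= s0 sT.
    - move=> u; rewrite in_itv /= => /andP[u0 uT]; rewrite qs.
      by have [] := Hq u; rewrite ?(ltW u0) ?uT.
  by rewrite derive1E derive_val.
set f := derive1 q * derive1 q.
set df := fun s => derive1 q s *: derive1 (derive1 q) s + derive1 q s *: derive1 (derive1 q) s.
have fd s : 0 <= s < T -> is_derive s 1 f (df s).
  by move=> sI; apply: is_deriveM; apply: isd; apply: ddq.
have df0 s : 0 < s < t0 -> df s = 0.
  move=> /andP[s0 st]; have sT : s < T by apply: lt_trans st t0lt.
  rewrite /df; have [qs|qs] := eqVneq (q s) 0.
    by rewrite (fermat s) ?s0 ?sT // scale0r addr0.
  have := Hode s; rewrite ltW // sT mu0 => /(_ isT) /eqP.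
  rewrite mulf_eq0 expf_eq0 (negbTE qs) andbF /= => /eqP.
  by rewrite /derive1n /= => ->; rewrite scaler0 addr0.
have fc c : 0 < c <= t0 -> f c = f 0.
  move=> /andP[c0 ct].
  have hd : forall x, x \in `]0, c[ -> is_derive x 1 f (df x).
    move=> x; rewrite in_itv /= => /andP[x0 xc]; apply: fd.
    by rewrite ltW //= (lt_trans (lt_le_trans xc ct) t0lt).
  have hc : {within `[0, c], continuous f}.
    apply: (@derivable_within_continuous R R f `[0, c]) => x.
    rewrite in_itv /= => /andP[x0 xc]; apply: ex_derive; apply: fd.
    by rewrite x0 /= (le_lt_trans (le_trans xc ct) t0lt).
  have [d dI] := MVT c0 hd hc.
  move: dI; rewrite in_itv /= => /andP[d0 dc].
  rewrite df0 ?d0 ?(lt_le_trans dc) // mul0r => /eqP.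
  by rewrite subr_eq0 => /eqP.
have f0 : f 0 = 0.
  rewrite -(fc t0) ?t0pos ?lexx //= /f /=.
  change (derive1 q t0 * derive1 q t0 = 0).
  by rewrite (fermat t0) ?t0pos ?t0lt // mulr0.
have dq0 c : 0 < c <= t0 -> derive1 q c = 0.
  move=> cI; have := fc c cI; rewrite f0 /f.
  change (derive1 q c * derive1 q c = 0 -> derive1 q c = 0); move=> /eqP.
  by rewrite mulf_eq0 orbb => /eqP.
have hd : forall x, x \in `]0, t0[ -> is_derive x 1 q (derive1 q x).
  move=> x; rewrite in_itv /= => /andP[x0 xc]; apply: isd; apply: dq.
  by rewrite ltW //= (lt_trans xc).
have hc : {within `[0, t0], continuous q}.
  apply: (@derivable_within_continuous R R q `[0, t0]) => x.
  rewrite in_itv /= => /andP[x0 xc]; apply: dq.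
  by rewrite x0 /= (le_lt_trans xc).
have [d dI] := MVT t0pos hd hc.
move: dI; rewrite in_itv /= => /andP[d0 dc].
rewrite dq0 ?d0 ?(ltW dc) // mul0r qt0 q0 sub0r => /eqP.
by rewrite oppr_eq0 oner_eq0.
Qed.

Theorem corollary1 (R : realType) (G rho : R) (W : 'M[R]_3 -> R)
  (T mu : R) (q vphi : R -> R) :
  0 < G -> 0 < rho ->
  (* hypotheses on W *)
  C1_on (@GLplus3 R) W ->
  (forall O F, SO3 O -> GLplus3 F -> W (O *m F) = W F) ->
  (forall O F, SO3 O -> GLplus3 F -> W (F *m O) = W F) ->
  (forall (s : R) F, 0 < s -> GLplus3 F -> W (s *: F) = s^-1 * W F) ->
  W 1%:M = rho `^ (3^-1) ->
  0 < T ->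
  (* q : [0,T) -> [0,oo) twice differentiable *)
  (forall t, 0 <= t < T ->
     0 <= q t /\ derivable q t 1 /\ derivable (derive1 q) t 1) ->
  (* varphi : [0,1] -> [0,oo) twice differentiable, varphi' > 0 *)
  (forall r, 0 <= r <= 1 ->
     0 <= vphi r /\ derivable vphi r 1 /\ derivable (derive1 vphi) r 1 /\
     0 < derive1 vphi r) ->
  vphi 0 = 0 -> derive1n 2 vphi 0 = 0 ->
  (* the ODE for varphi on (0,1] *)
  (forall r, 0 < r <= 1 ->
     let h := fun s => s ^+ 4 / vphi s * derive1 (gfun W rho) (yfun vphi s) in
     derivable h r 1 /\
     vphi r ^+ 2 / r ^+ 5 * derive1 h r + vphi r / r ^+ 2 * gfun W rho (yfun vphi r)
     = (4 * pi / 3 * G * rho + mu * lam vphi r ^+ 3) * rho `^ (- 3^-1) * vphi r) ->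
  derive1 (gfun W rho) (yfun vphi 1) = 0 ->
  vphi 1 = 1 ->
  (* the ODE for q *)
  (forall t, 0 <= t < T -> q t ^+ 2 * derive1n 2 q t = mu) ->
  q 0 = 1 ->
  (* conclusion: phi(t,R) = q(t) varphi(R) solves the Lagrangian system *)
  (forall t r, 0 <= t < T -> 0 < r <= 1 ->
     let H := fun s => s ^+ 4 / Phi q vphi t s
                       * derive1 (gfun W rho) (Yfun q vphi t s) in
     derivable (fun s => Phi q vphi s r) t 1 /\
     derivable (fun s => Phi_t q vphi s r) t 1 /\
     derivable H r 1 /\
     Phi_tt q vphi t r
     - rho `^ (3^-1) * (1 / (r ^+ 2 * Phi q vphi t r) * derive1 H r
                        + r / Phi q vphi t r ^+ 2 * gfun W rho (Yfun q vphi t r))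
     + 4 * pi / 3 * r ^+ 3 * G * rho / Phi q vphi t r ^+ 2 = 0) /\
  (forall t, 0 <= t < T -> derive1 (gfun W rho) (Yfun q vphi t 1) = 0).
Proof.
move=> G0 rho0 _ _ _ _ _ T0 Hq Hv v0 v2 Hode g1 v1 Hqode q0.
have qnz := q_nz _ _ _ _ Hq Hqode q0.
have PhiRE t s : Phi_R q vphi t s = q t * derive1 vphi s.
  by rewrite /Phi_R /Phi derive1_scal.
have PhitE s r : Phi_t q vphi s r = vphi r * derive1 q s.
  rewrite /Phi_t /Phi -derive1_scal; congr derive1.
  by apply: funext => u; rewrite mulrC.
have PhittE t r : Phi_tt q vphi t r = vphi r * derive1 (derive1 q) t.
  rewrite /Phi_tt -derive1_scal; congr derive1.
  by apply: funext => u; rewrite PhitE.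
have LamE t s : Lam q vphi t s = q t * lam vphi s.
  rewrite /Lam /lam; case: eqP => _; first exact: PhiRE.
  by rewrite /Phi mulrA.
have YE t s : q t != 0 -> Yfun q vphi t s = yfun vphi s.
  move=> Qnz; rewrite /Yfun /yfun PhiRE LamE invfM mulrACA mulfV // mul1r.
  by [].
have HE t : q t != 0 -> (fun s => s ^+ 4 / Phi q vphi t s
                       * derive1 (gfun W rho) (Yfun q vphi t s)) =
            (fun s => (q t)^-1 * (s ^+ 4 / vphi s * derive1 (gfun W rho) (yfun vphi s))).
  move=> Qnz; apply: funext => s; rewrite YE // /Phi invfM.
  by rewrite mulrCA !mulrA.
split; last first.
  by move=> t tI; rewrite YE // qnz.
move=> t r tI rI H.
have Qnz := qnz t tI.
have [_ [dq ddq]] := Hq t tI.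
have [dh Hr] := Hode r rI.
split.
  rewrite (_ : (fun s => Phi q vphi s r) = vphi r \*: q); first exact: derivableZ.
  by apply: funext => s; rewrite /Phi /GRing.scale /= mulrC.
split.
  rewrite (_ : (fun s => Phi_t q vphi s r) = vphi r \*: derive1 q); first exact: derivableZ.
  by apply: funext => s; rewrite PhitE.
split.
  rewrite /H HE //.
  rewrite (_ : (fun s => _) = (q t)^-1 \*: (fun s => s ^+ 4 / vphi s * derive1 (gfun W rho) (yfun vphi s))) //.
  exact: derivableZ.
rewrite /H HE // derive1_scal PhittE YE // /Phi.
move: Hr.
set d := derive1 _ r.
set gy := gfun W rho (yfun vphi r).
set v := vphi r.
set Q := q t.
set qq := derive1 (derive1 q) t.
have HQ : Q ^+ 2 * qq = mu := Hqode t tI.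
have rnz : r != 0 by case/andP: rI => r0 _; rewrite gt_eqF.
rewrite /lam (negbTE rnz) powRN.
set rp := rho `^ 3^-1.
have rpnz : rp != 0 by rewrite gt_eqF // powR_gt0.
have [vz|vnz] := eqVneq v 0.
  move=> _; rewrite vz !mulr0 mul0r expr0n /= !invr0 !mulr0 !mul0r.
  by rewrite !addr0 mulr0 subr0.
move=> Hr.
have Hd : v ^+ 2 / r ^+ 5 * d =
   (4 * pi / 3 * G * rho + mu * (v / r) ^+ 3) * rp^-1 * v - v / r ^+ 2 * gy.
  by rewrite -Hr addrK.
have dE : d = ((4 * pi / 3 * G * rho + mu * (v / r) ^+ 3) * rp^-1 * v - v / r ^+ 2 * gy) * r ^+ 5 / v ^+ 2.
  by rewrite -Hd; field; rewrite vnz rnz.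
have qqE : qq = mu / Q ^+ 2.
  by rewrite -HQ; field.
rewrite qqE dE.
by field; rewrite vnz Qnz rnz rpnz.
Qed.
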